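(* Let $l\in\mathbb{N}$ and let $G^1,\dots,G^l$ be compatible nontrivial monotonic hypergraph sequences. For $n\in\mathbb{N}$ let $V_n:=V(G^1_n)$, and for $k\in\mathbb{N}$ let $Q^k_n:=(V_n,\binom{V_n}{k})$ and $Q^k=(Q^k_n)_{n\in\mathbb{N}}$. For $x\in\mathbb{R}$ let $M(x)\in\mathbb{N}\cup\{+\infty\}$ be the infimum of all $n\in\mathbb{N}$ with $|V_n|>x$. Then for every real $s>1$ and every $m\in\mathbb{N}_0$, $$\mathrm{vdW}_{l+m}(G^1,\dots,G^l,\underbrace{Q^2,\dots,Q^2}_{m})=\mathrm{vdW}_{l+1}(G^1,\dots,G^l,Q^{m+1})\le\max\Big(M(s\cdot m),\ \mathrm{cr}\big((G^1,\dots,G^l),1-\tfrac1s\big)\Big).$$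
   Context: A finite hypergraph $G=(V,E)$ has finite vertex set $V$ and $E\subseteq\mathcal P(V)$; $\binom{V}{k}$ is the set of $k$-element subsets of $V$. A sequence $(G_n)_{n\in\mathbb{N}}$ of finite hypergraphs is nontrivial monotonic if $V(G_n)\subseteq V(G_{n+1})$, $E(G_n)\subseteq E(G_{n+1})$, $V(G_1)\ne\emptyset$ and $\emptyset\notin E(G_n)$ for all $n$. Sequences $H^1,\dots,H^r$ are compatible if $V(H^1_n)=\dots=V(H^r_n)$ for all $n$. For compatible nontrivial monotonic sequences $H^1,\dots,H^r$, $\mathrm{vdW}_r(H^1,\dots,H^r)\in\mathbb{N}\cup\{+\infty\}$ is the infimum of all $n\in\mathbb{N}$ such that for every map $f:V(H^1_n)\to\{1,\dots,r\}$ there is some $i\in\{1,\dots,r\}$ and some hyperedge of $H^i_n$ all of whose vertices get colour $i$. A set is independent in a hypergraph if it contains no hyperedge. For $q\in\mathbb{R}_{>0}$, $\mathrm{cr}((H^1,\dots,H^r),q)\in\mathbb{N}\cup\{+\infty\}$ is the infimum of all $n\in\mathbb{N}$ such that for all $n'\ge n$ and all $r$-tuples $(S_1,\dots,S_r)$ of pairwise disjoint sets with $S_i$ independent in $H^i_{n'}$ we have $\frac{|S_1|+\dots+|S_r|}{|V(H^1_{n'})|}<q$. Infima of empty sets are $+\infty$. *)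

(* Defs.v *)
From HB Require Import structures.
From mathcomp Require Import all_boot all_order all_algebra.
From mathcomp Require Import finmap.
From mathcomp Require Import boolp reals.
Set Implicit Arguments. Unset Strict Implicit. Unset Printing Implicit Defensive.
Import Order.TTheory GRing.Theory Num.Theory.
Local Open Scope fset_scope.

(* Extended naturals N u {+oo}: [Some n] = n, [None] = +oo. *)
Definition enat := option nat.

Definition enat_le (a b : enat) : Prop :=
  match a, b with
  | _, None => True
  | None, Some _ => False
  | Some x, Some y => (x <= y)%N
  end.

Definition enat_max (a b : enat) : enat :=
  match a, b with
  | Some x, Some y => Some (maxn x y)
  | _, _ => None
  end.

Lemma exists_asbool (P : nat -> Prop) : (exists n, P n) -> exists n, `[< P n >].
Proof. by case=> n Pn; exists n; apply/asboolP. Qed.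

Definition einf (P : nat -> Prop) : enat :=
  match pselect (exists n, P n) with
  | left H => Some (ex_minn (exists_asbool H))
  | right _ => None
  end.

Section Hyper.
Variable T : choiceType.

(* A sequence of hypergraphs (G_n)_{n in N} on the common vertex universe T is
   given by its vertex sets V n and its hyperedge predicates E n (a hyperedge is
   a finite subset of T). Only indices n >= 1 are meaningful (N = {1,2,...}). *)

Definition nontrivial_monotonic (V : nat -> {fset T}) (E : nat -> {fset T} -> Prop) : Prop :=
  [/\ (forall n, (1 <= n)%N -> forall e, E n e -> e `<=` V n),
      (forall n, (1 <= n)%N -> V n `<=` V n.+1),
      (forall n, (1 <= n)%N -> forall e, E n e -> E n.+1 e),
      V 1 != fset0 &
      (forall n, (1 <= n)%N -> ~ E n fset0)].

Definition Qk (V : nat -> {fset T}) (k : nat) : nat -> {fset T} -> Prop :=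
  fun n e => e `<=` V n /\ #|` e| = k.

Definition fam_cat (a b : nat) (F : 'I_a -> nat -> {fset T} -> Prop)
  (H : 'I_b -> nat -> {fset T} -> Prop) : 'I_(a + b) -> nat -> {fset T} -> Prop :=
  fun i => match split i with inl j => F j | inr j => H j end.

Definition vdW_prop (r : nat) (V : nat -> {fset T})
  (H : 'I_r -> nat -> {fset T} -> Prop) (n : nat) : Prop :=
  forall f : T -> 'I_r, exists i : 'I_r, exists e, H i n e /\ forall v, v \in e -> f v = i.

Definition vdW (r : nat) (V : nat -> {fset T}) (H : 'I_r -> nat -> {fset T} -> Prop) : enat :=
  einf (fun n => (1 <= n)%N /\ vdW_prop V H n).

Definition independent (E : {fset T} -> Prop) (S : {fset T}) : Prop :=
  forall e, E e -> ~ (e `<=` S).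

Definition cr (R : realType) (r : nat) (V : nat -> {fset T})
  (H : 'I_r -> nat -> {fset T} -> Prop) (q : R) : enat :=
  einf (fun n => (1 <= n)%N /\
    forall n', (n <= n')%N ->
    forall S : 'I_r -> {fset T},
      (forall i, S i `<=` V n') ->
      (forall i j, i != j -> S i `&` S j = fset0) ->
      (forall i, independent (H i n') (S i)) ->
      ((\sum_(i < r) #|` S i|)%:R / #|` V n'|%:R < q)%R).

Definition Mfun (R : realType) (V : nat -> {fset T}) (x : R) : enat :=
  einf (fun n => (1 <= n)%N /\ (x < #|` V n|%:R)%R).

End Hyper.

(* Main.v *)
Require Import Defs.
From HB Require Import structures.
From mathcomp Require Import all_boot all_order all_algebra.
From mathcomp Require Import finmap.
From mathcomp Require Import boolp reals.
From mathcomp Require Import ring lra.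
Set Implicit Arguments. Unset Strict Implicit. Unset Printing Implicit Defensive.
Import Order.TTheory GRing.Theory Num.Theory.
Local Open Scope fset_scope.


Lemma einf_le (P : nat -> Prop) n : P n -> enat_le (einf P) (Some n).
Proof.
move=> Pn; rewrite /einf; case: pselect => [H|[]]; last by exists n.
case: ex_minnP => k _ /=; apply; exact/asboolP.
Qed.

Lemma einfP (P : nat -> Prop) a : einf P = Some a -> P a.
Proof.
rewrite /einf; case: pselect => // H [<-]; case: ex_minnP => k /asboolP //.
Qed.

Section S.
Variable T : choiceType.

Lemma fam_cat_l a b (F : 'I_a -> nat -> {fset T} -> Prop) H j :
  fam_cat F H (lshift b j) = F j.
Proof. by rewrite /fam_cat -[lshift b j]/(unsplit (inl j)) unsplitK. Qed.

Lemma fam_cat_r a b (F : 'I_a -> nat -> {fset T} -> Prop) H (j : 'I_b) :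
  fam_cat F H (rshift a j) = H j.
Proof. by rewrite /fam_cat -[rshift a j]/(unsplit (inr j)) unsplitK. Qed.

Definition cls r (A : {fset T}) (f : T -> 'I_r) j : {fset T} :=
  [fset v in [seq v <- enum_fset A | f v == j]].

Lemma in_cls r A (f : T -> 'I_r) j v : (v \in cls A f j) = (f v == j) && (v \in A).
Proof. by rewrite /cls in_fset /= mem_filter. Qed.

Lemma card_cls r A (f : T -> 'I_r) j : #|` cls A f j| = count (fun v => f v == j) (enum_fset A).
Proof. by rewrite /cls card_fseq undup_id ?size_filter // filter_uniq // fset_uniq. Qed.

Lemma sum_count r (f : T -> 'I_r) (s : seq T) :
  \sum_(j < r) count (fun v => f v == j) s = size s.
Proof.
elim: s => [|x s IH] /=; first by rewrite big1.
rewrite big_split /= IH. idtac.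
rewrite (bigD1 (f x)) //= eqxx big1 // => j /negPf; rewrite eq_sym => ->//.
Qed.

Lemma card_cls_sum r A (f : T -> 'I_r) : #|` A| = \sum_(j < r) #|` cls A f j|.
Proof. by rewrite (eq_bigr _ (fun j _ => card_cls A f j)) sum_count. Qed.

Lemma card_ord_fset m (A : {fset 'I_m}) : (#|` A| <= m)%N.
Proof.
rewrite -[X in (_ <= X)%N](size_enum_ord m); apply: uniq_leq_size; first exact: fset_uniq.
by move=> x; rewrite mem_enum.
Qed.

Lemma take_sub (A : {fset T}) k : (k <= #|` A|)%N ->
  exists e : {fset T}, e `<=` A /\ #|` e| = k.
Proof.
move=> hk; exists [fset x in take k (enum_fset A)]; split.
  by apply/fsubsetP=> x; rewrite in_fset /= => /mem_take.
rewrite card_fseq undup_id ?size_take_min ?(minn_idPl hk) //.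
by apply: take_uniq; exact: fset_uniq.
Qed.
End S.


Lemma part1 (T : choiceType) (l : nat) (V : nat -> {fset T})
  (G : 'I_l -> nat -> {fset T} -> Prop) (hl : (0 < l)%N)
  (hsub : forall i n, (1 <= n)%N -> forall e, G i n e -> e `<=` V n) m n :
  (1 <= n)%N ->
  vdW_prop V (fam_cat G (fun _ : 'I_m => Qk V 2)) n <->
  vdW_prop V (fam_cat G (fun _ : 'I_1 => Qk V m.+1)) n.
Proof.
move=> n1; split.
- move=> hA f.
  pose Sl := cls (V n) f (rshift l ord0).
  have [big|small] := leqP m.+1 #|` Sl|.
    have [e [eS ce]] := take_sub big.
    exists (rshift l ord0), e; rewrite fam_cat_r; split.
      split=> //; apply: fsubset_trans eS _; apply/fsubsetP=> v.
      by rewrite in_cls => /andP[].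
    by move=> v /(fsubsetP eS); rewrite in_cls => /andP[/eqP].
  pose i0 : 'I_l := Ordinal hl.
  pose g v : 'I_(l + m) := if v \in Sl then
      odflt (lshift m i0) (omap (@rshift l m) (insub (index v (enum_fset Sl))))
    else match split (f v) with inl j => lshift m j | inr _ => lshift m i0 end.
  have gS v : v \in Sl -> exists k : 'I_m, g v = rshift l k /\ index v (enum_fset Sl) = k.
    move=> vS; have hk : (index v (enum_fset Sl) < m)%N.
      by apply: (leq_trans _ (small : (#|` Sl| <= m)%N)); rewrite index_mem.
    exists (Ordinal hk); rewrite /g vS insubT //.
  have [i [e [He mono]]] := hA g.
  case: (split_ordP i) He mono => [j -> | k ->].
    rewrite fam_cat_l => He mono; exists (lshift 1 j), e; rewrite fam_cat_l; split=> //.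
    move=> v ve; have vV : v \in V n by apply: (fsubsetP (hsub _ _ n1 _ He)).
    have := mono v ve; case vS: (v \in Sl).
      by have [k [-> _]] := gS v vS => /eqP; rewrite eq_rlshift.
    rewrite /g vS; case: (split_ordP (f v)) => [j' fv | k' fv].
      by move/lshift_inj <-.
    by move: vS; rewrite /Sl in_cls vV fv (ord1 k') eqxx.
  rewrite fam_cat_r => -[eV ce] mono; exfalso.
  have x0 : T.
    by move: ce; case: (enum_fset e) => [|x _] //.
  have : e `<=` [fset nth x0 (enum_fset Sl) k].
    apply/fsubsetP => v ve; rewrite in_fset1.
    case vS: (v \in Sl); last first.
      move: (mono v ve); rewrite /g vS; case: split => [?|?] /eqP; by rewrite eq_lrshift.
    have [k' [gv iv]] := gS v vS.
    move: (mono v ve); rewrite gv => /rshift_inj ek; rewrite -ek -iv nth_index //.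
  by move/fsubset_leq_card; rewrite ce cardfs1.
- move=> hB g.
  pose f v : 'I_(l + 1) := match split (g v) with inl j => lshift 1 j | inr _ => rshift l ord0 end.
  have [i [e [He mono]]] := hB f.
  case: (split_ordP i) He mono => [j -> | k ->].
    rewrite fam_cat_l => He mono; exists (lshift m j), e; rewrite fam_cat_l; split=> //.
    move=> v /mono; rewrite /f; case: (split_ordP (g v)) => [j' -> | k' _].
      by move/lshift_inj ->.
    by move/eqP; rewrite eq_rlshift.
  rewrite fam_cat_r => -[eV ce] mono.
  have hr v : v \in e -> exists k : 'I_m, g v = rshift l k.
    move=> /mono; rewrite /f; case: (split_ordP (g v)) => [j' _ | k' ->].
      by move/eqP; rewrite eq_lrshift.
    by exists k'.
  have [v0 v0e] : exists v, v \in e.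
    by apply/fset0Pn; apply/eqP => e0; move: ce; rewrite e0 cardfs0.
  have [k0 _] := hr v0 v0e.
  pose h v : 'I_m := match split (g v) with inl _ => k0 | inr k => k end.
  have hh v : v \in e -> g v = rshift l (h v).
    move=> /hr [k1 gv]; by rewrite /h gv -[rshift l k1]/(unsplit (inr k1)) unsplitK.
  have [[v1 [v2 [v1e [v2e [neq eqh]]]]]|ninj] :=
    pselect (exists v1 v2, v1 \in e /\ v2 \in e /\ v1 != v2 /\ h v1 = h v2).
    exists (rshift l (h v1)), [fset v1; v2]; rewrite fam_cat_r; split.
      split; last by rewrite cardfs2 neq.
      apply/fsubsetP => v; rewrite in_fset2 => /orP[] /eqP ->; exact: (fsubsetP eV).
    move=> v; rewrite in_fset2 => /orP[] /eqP ->; first exact: hh.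
    by rewrite eqh; exact: hh.
  exfalso.
  have inj : {in e &, injective h}.
    move=> a b ae be hab; apply/eqP; apply/negPn/negP => nab.
    by apply: ninj; exists a, b.
  have := card_ord_fset (h @` e); move/card_in_imfsetP: inj => /eqP ->.
  by rewrite ce ltnn.
Qed.


Theorem theorem1 (T : choiceType) (l : nat) (V : nat -> {fset T})
  (G : 'I_l -> nat -> {fset T} -> Prop)
  (hl : (0 < l)%N)
  (hG : forall i, nontrivial_monotonic V (G i))
  (R : realType) (s : R) (hs : (1 < s)%R) (m : nat) :
  vdW V (fam_cat G (fun _ : 'I_m => Qk V 2))
    = vdW V (fam_cat G (fun _ : 'I_1 => Qk V m.+1))
  /\ enat_le (vdW V (fam_cat G (fun _ : 'I_1 => Qk V m.+1)))
             (enat_max (Mfun V (s * m%:R)%R) (cr V G (1 - s^-1)%R)).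
Proof.
have hsub : forall i n, (1 <= n)%N -> forall e, G i n e -> e `<=` V n.
  by move=> i n n1 e; case: (hG i) => h _ _ _ _; exact: h n n1 e.
pose i0 : 'I_l := Ordinal hl.
have hmon : forall a k, (1 <= a)%N -> V a `<=` V (a + k)%N.
  move=> a k a1; elim: k => [|k IH]; first by rewrite addn0.
  case: (hG i0) => _ h _ _ _; apply: fsubset_trans IH _; rewrite addnS; apply: h.
  exact: leq_trans a1 (leq_addr _ _).
split.
  rewrite /vdW; congr einf; apply: funext => n; apply: propext; split.
    by case=> n1 h; split=> //; apply/(part1 hl hsub).
  by case=> n1 h; split=> //; apply/(part1 hl hsub).
case hM: (Mfun V (s * m%:R)) => [a|]; last by case: vdW.
case hC: (cr V G (1 - s^-1)) => [b|]; last by case: vdW.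
have [a1 ha] := einfP hM.
have [b1 hb] := einfP hC.
rewrite /enat_max; apply: einf_le.
set n := maxn a b.
have n1 : (1 <= n)%N by apply: leq_trans a1 (leq_maxl _ _).
split=> // f.
have [[i [e [He mono]]]|no] :=
  pselect (exists i : 'I_l, exists e, G i n e /\ forall v, v \in e -> f v = lshift 1 i).
  by exists (lshift 1 i), e; rewrite fam_cat_l.
pose S i := cls (V n) f (lshift 1 i).
have sub : forall i, S i `<=` V n.
  by move=> i; apply/fsubsetP => v; rewrite in_cls => /andP[].
have disj : forall i j, i != j -> S i `&` S j = fset0.
  move=> i j ij; apply/fsetP => v; rewrite in_fsetI !in_cls in_fset0.
  apply/negbTE/negP => /andP[/andP[/eqP -> _] /andP[/eqP /lshift_inj eij _]].
  by rewrite eij eqxx in ij.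
have indep : forall i, independent (G i n) (S i).
  move=> i e He /fsubsetP sb; apply: no; exists i, e; split=> // v /sb.
  by rewrite in_cls => /andP[/eqP].
have hsum := hb n (leq_maxr _ _) S sub disj indep.
pose Sl := cls (V n) f (rshift l ord0).
have hcard : #|` V n| = (\sum_(i < l) #|` S i| + #|` Sl|)%N.
  by rewrite (card_cls_sum (V n) f) big_split_ord big_ord1.
have han : (#|` V a| <= #|` V n|)%N.
  apply: fsubset_leq_card; rewrite /n -(subnKC (leq_maxl a b)); exact: hmon.
have big : (m.+1 <= #|` Sl|)%N.
  rewrite ltnNge; apply/negP => small.
  move: hsum ha; rewrite hcard.
  set x := (\sum_(i < l) #|` S i|)%N; set c := #|` Sl|.
  have : (#|` V a|%:R <= (x + c)%:R :> R)%R by rewrite ler_nat -hcard.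
  have : (c%:R <= m%:R :> R)%R by rewrite ler_nat.
  move=> hc hVa hs1 hsm.
  have s0 : (0 < s)%R by apply: lt_trans hs; exact: ltr01.
  have m0 : (0 <= s * m%:R)%R by rewrite mulr_ge0 // ltW.
  have N0 : (0 < (x + c)%:R :> R)%R.
    by apply: lt_le_trans hVa; apply: le_lt_trans hsm.
  rewrite ltr_pdivrMr // in hs1.
  have h2 : (s * x%:R < (s - 1) * (x + c)%:R)%R.
    have -> : ((s - 1) * (x + c)%:R = s * ((1 - s^-1) * (x + c)%:R))%R.
      by field; rewrite gt_eqF.
    by rewrite ltr_pM2l.
  move: hc hVa hsm h2; rewrite natrD => hc hVa hsm h2.
  nra.
have [e [eS ce]] := take_sub big.
exists (rshift l ord0), e; rewrite fam_cat_r; split.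
  split=> //; apply: fsubset_trans eS _; apply/fsubsetP=> v.
  by rewrite in_cls => /andP[].
by move=> v /(fsubsetP eS); rewrite in_cls => /andP[/eqP].
Qed.
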